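(* Let $r$ be a prime power, $q=r^2$, and let $M$ be a positive integer with $M\mid (r+1)$. Then there exists a matrix $A\in M_{M,M}(\mathbb{F}_q)$ such that $AA^\dagger$ is diagonal (indeed $AA^\dagger=MI_M$ with $M\neq 0$ in $\mathbb{F}_q$) and $\delta_i(A)=M-i+1$ for all $1\le i\le M$.
   Context: For $a\in\mathbb{F}_q$, $\overline{a}:=a^r$; for a matrix $A=[a_{ij}]$, $A^\dagger:=[\overline{a_{ji}}]$. For $A\in M_{s,l}(\mathbb{F}_q)$ and $1\le i\le s$, $\delta_i(A)$ denotes the minimum Hamming weight of the linear code of length $l$ over $\mathbb{F}_q$ generated by the first $i$ rows of $A$. *)

(* Defs.v *)
From HB Require Import structures.
From mathcomp Require Import all_boot all_order all_algebra all_field.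
Set Implicit Arguments. Unset Strict Implicit. Unset Printing Implicit Defensive.
Import GRing.Theory.
Local Open Scope ring_scope.

(* Conjugate transpose w.r.t. the involution a |-> a^r:  A^dagger = [ conj(a_ji) ]. *)
Definition cdag (F : finFieldType) (r : nat) (s l : nat) (A : 'M[F]_(s, l)) : 'M[F]_(l, s) :=
  \matrix_(i < l, j < s) (A j i) ^+ r.

Definition hwt (F : finFieldType) (l : nat) (c : 'rV[F]_l) : nat :=
  #|[set j : 'I_l | c 0 j != 0]|.

(* Matrix keeping the first i rows of A and zeroing the others; its row space
   is the linear code generated by the first i rows of A. *)
Definition first_rows (F : finFieldType) (s l : nat) (i : nat) (A : 'M[F]_(s, l)) : 'M[F]_(s, l) :=
  \matrix_(j < s) (if (j < i)%N then row j A else 0).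

(* delta_i(A): minimum Hamming weight of a nonzero codeword of the code spanned
   by the first i rows of A.  (Convention: l.+1 if that code is {0}.) *)
Definition delta (F : finFieldType) (s l : nat) (i : nat) (A : 'M[F]_(s, l)) : nat :=
  \big[minn/l.+1]_(c : 'rV[F]_l | (c <= first_rows i A)%MS && (c != 0)) hwt c.

(* Main.v *)
Require Import Defs.
From HB Require Import structures.
From mathcomp Require Import all_boot all_order all_algebra all_field zify.
From mathcomp Require Import cyclic.
Import GRing.Theory.
Local Open Scope ring_scope.

Lemma exists_prim {F : finFieldType} (M : nat) :
  (0 < M)%N -> (M %| #|F|.-1)%N -> exists w : F, M.-primitive_root w.
Proof.
move=> M0 dM.
pose rs := enum (predC1 (0 : F)).
have n0 : (0 < #|F|.-1)%N.
  rewrite -(cardC1 (0:F)); apply/card_gt0P; exists 1; by rewrite !inE oner_eq0.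
have : has #|F|.-1.-primitive_root rs.
  apply: has_prim_root => //; last by rewrite -cardE cardC1.
  - apply/allP => x; rewrite mem_enum !inE => x0.
    rewrite unity_rootE; apply/eqP.
    apply: (mulIf x0); rewrite mul1r -exprSr prednK ?expf_card //.
    by apply/card_gt0P; exists 0.
  - exact: enum_uniq.
case/hasP => g _ pg.
exists (g ^+ (#|F|.-1 %/ M)); exact: dvdn_prim_root.
Qed.
Lemma Mnz {F : finFieldType} (r : nat)
  (hr : exists p k : nat, [/\ prime p, (0 < k)%N & r = (p ^ k)%N])
  (hF : #|F| = (r ^ 2)%N) (M : nat) (hMr : (M %| r.+1)%N) : (M%:R : F) != 0.
Proof.
case: hr => p [k [pp k0 er]].
have pc : p \in [pchar F].
  by apply: (card_finPcharP (n := (k * 2)%N)) => //; rewrite hF er expnM.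
rewrite -(dvdn_pcharf pc); apply/negP => dpM.
have dp1 : (p %| r.+1)%N := dvdn_trans dpM hMr.
have dpr : (p %| r)%N by rewrite er dvdn_exp.
move: dp1; rewrite -addn1 (dvdn_addr _ dpr) dvdn1 => /eqP p1.
by rewrite p1 in pp.
Qed.
Definition Amx {F : finFieldType} (M : nat) (w : F) : 'M[F]_M :=
  \matrix_(i < M, j < M) w ^+ (i * j).

Lemma prim_inj {F : finFieldType} (M : nat) (w : F) (a b : 'I_M) :
  M.-primitive_root w -> w ^+ a = w ^+ b -> a = b.
Proof.
move=> pw /eqP; rewrite (eq_prim_root_expr pw) !modn_small // => /eqP ab.
exact: val_inj.
Qed.

Lemma AAdag {F : finFieldType} (M r : nat) (w : F) :
  M.-primitive_root w -> (M %| r.+1)%N ->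
  Amx M w *m cdag r (Amx M w) = (M%:R : F)%:M.
Proof.
move=> pw dMr; apply/matrixP => i j; rewrite !mxE.
have -> : \sum_k Amx M w i k * cdag r (Amx M w) k j
          = \sum_(k < M) (w ^+ (i + j * r)) ^+ k.
  apply: eq_bigr => k _; rewrite !mxE -!exprM -exprD.
  congr (w ^+ _); nia.
have zM : (w ^+ (i + j * r)) ^+ M = 1.
  by rewrite -exprM (mulnC _ M) exprM (prim_expr_order pw) expr1n.
case: (eqVneq i j) => [<-|ij].
  have -> : w ^+ (i + i * r) = 1.
    apply/eqP; rewrite -(prim_order_dvd pw).
    by rewrite -{1}(muln1 i) -mulnDr add1n dvdn_mull.
  rewrite /= mulr1n (eq_bigr (fun _ => 1)) ?sumr_const ?card_ord // => k _; by rewrite expr1n.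
rewrite /= mulr0n.
have z1 : w ^+ (i + j * r) != 1.
  rewrite -(prim_order_dvd pw); apply: contra ij => dv.
  apply/eqP; apply: val_inj => /=.
  case/dvdnP: dMr => d hd.
  have e1 : (((i + j * r) + j) %% M = j %% M)%N.
    by rewrite -modnDml (eqP dv) add0n.
  have e2 : (((i + j * r) + j) %% M = i %% M)%N.
    have -> : ((i + j * r) + j = (j * d) * M + i)%N.
      by rewrite -mulnA -hd; lia.
    by rewrite modnMDl.
  by move: e1; rewrite e2 !modn_small.
have := subrX1 (w ^+ (i + j * r)) M.
rewrite zM subrr => /esym /eqP; rewrite mulf_eq0 subr_eq0 (negPf z1) /=.
by move/eqP.
Qed.
Definition pol {F : finFieldType} {M : nat} (u : 'rV[F]_M) (i : nat) : {poly F} :=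
  \sum_(k < M) (if (k < i)%N then u 0 k else 0) *: 'X^k.

Lemma size_pol {F : finFieldType} {M : nat} (u : 'rV[F]_M) i : (size (pol u i) <= i)%N.
Proof.
apply/leq_sizeP => n ni; rewrite /pol coef_sum big1 // => k _.
rewrite coefZ coefXn; case: ifP => [ki|]; last by rewrite mul0r.
case: eqP => [e|]; last by rewrite mulr0.
by rewrite -e ltnNge ni in ki.
Qed.

Lemma code_eval {F : finFieldType} (M : nat) (w : F) (u : 'rV[F]_M) i j :
  (u *m first_rows i (Amx M w)) 0 j = (pol u i).[w ^+ j].
Proof.
rewrite !mxE /pol horner_sum; apply: eq_bigr => k _.
rewrite hornerZ hornerXn !mxE; case: ifP => _; last by rewrite !mxE !mul0r mulr0.
by rewrite !mxE -exprM mulnC.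
Qed.

Lemma lower {F : finFieldType} (M : nat) (w : F) i (c : 'rV[F]_M) :
  (i <= M)%N -> M.-primitive_root w -> (c <= first_rows i (Amx M w))%MS -> c != 0 ->
  (M - i + 1 <= hwt c)%N.
Proof.
move=> iM pw /submxP [u ->] c0.
set Z := [set j : 'I_M | (u *m first_rows i (Amx M w)) 0 j == 0].
have f0 : pol u i != 0.
  apply: contra c0 => /eqP f0; apply/eqP/rowP => j.
  by rewrite code_eval f0 horner0 mxE.
pose rs := [seq w ^+ (val j) | j <- enum Z].
have := max_poly_roots f0 (rs := rs).
have -> : all (root (pol u i)) rs.
  apply/allP => x /mapP [j]; rewrite mem_enum inE => /eqP h ->.
  by rewrite /root -code_eval h.
have -> : uniq rs.
  rewrite map_inj_uniq ?enum_uniq // => a b; exact: prim_inj pw.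
rewrite size_map -cardE => /(_ isT isT) hZ.
have := size_pol u i.
have hc : hwt (u *m first_rows i (Amx M w)) = #|~: Z|.
  rewrite /hwt; congr (#|pred_of_set _|); apply/setP => j; by rewrite !inE.
have := cardsC Z; rewrite card_ord hc.
move: hZ; move: (#|Z|) (#|~: Z|) (size (pol u i)) => a b s; lia.
Qed.

Lemma witness {F : finFieldType} (M : nat) (w : F) i :
  (1 <= i <= M)%N -> M.-primitive_root w ->
  exists c : 'rV[F]_M, [/\ (c <= first_rows i (Amx M w))%MS, c != 0 &
                          (hwt c <= M - i + 1)%N].
Proof.
case/andP => i1 iM pw.
pose rs0 := [seq w ^+ l | l <- iota 0 i.-1].
pose f0 := \prod_(x <- rs0) ('X - x%:P).
have sf0 : size f0 = i by rewrite size_prod_XsubC size_map size_iota prednK.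
pose u : 'rV[F]_M := \row_(k < M) f0`_k.
pose c := u *m first_rows i (Amx M w).
have ce j : c 0 j = f0.[w ^+ j].
  rewrite (horner_coef_wide _ (n := M)) ?sf0 // !mxE; apply: eq_bigr => k _.
  rewrite !mxE; case: ifP => ki; first by rewrite !mxE -exprM mulnC.
  by rewrite mxE mulr0 nth_default ?mul0r // sf0 leqNgt ki.
have rootE x : (f0.[x] == 0) = (x \in rs0).
  by rewrite -root_prod_XsubC.
exists c; split; first exact: submxMl.
  have M1 : (M.-1 < M)%N by rewrite prednK //; apply: leq_trans iM.
  apply/eqP => /rowP /(_ (Ordinal M1)); rewrite ce mxE => /eqP.
  rewrite rootE => /mapP [l]; rewrite mem_iota add0n => li /eqP.
  rewrite (eq_prim_root_expr pw) !modn_small //=; last first.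
    move: li iM; lia.
  move/eqP => el; move: li; rewrite -el; lia.
set Z := [set j : 'I_M | c 0 j == 0].
have hc : hwt c = #|~: Z|.
  rewrite /hwt; congr (#|pred_of_set _|); apply/setP => j; by rewrite !inE.
have le1 : (i.-1 <= M)%N by apply: leq_trans iM; apply: leq_pred.
have SZ : [set widen_ord le1 l | l : 'I_i.-1] \subset Z.
  apply/subsetP => x /imsetP [l _ ->]; rewrite inE ce rootE.
  by apply/mapP; exists (val l) => //; rewrite mem_iota add0n ltn_ord.
have cS : #|[set widen_ord le1 l | l : 'I_i.-1]| = i.-1.
  rewrite card_imset ?card_ord // => a b /(congr1 val) /= ab; exact: val_inj.
have := subset_leq_card SZ; rewrite cS.
have := cardsC Z; rewrite card_ord hc.
move: (#|Z|) (#|~: Z|) => a b; lia.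
Qed.

Lemma bigmin_le_seq (T : eqType) (s : seq T) (P : pred T) (G : T -> nat) x c :
  c \in s -> P c -> (\big[minn/x]_(i <- s | P i) G i <= G c)%N.
Proof.
elim: s => // a s IH; rewrite inE big_cons => /orP [/eqP <-|cs] Pc.
  by rewrite Pc geq_minl.
case: ifP => _; last exact: IH.
exact: leq_trans (geq_minr _ _) (IH cs Pc).
Qed.

Theorem lemma4p2 (F : finFieldType) (r : nat)
  (hr : exists p k : nat, [/\ prime p, (0 < k)%N & r = (p ^ k)%N])
  (hF : #|F| = (r ^ 2)%N)
  (M : nat) (hM : (0 < M)%N) (hMr : (M %| r.+1)%N) :
  exists A : 'M[F]_(M, M),
    [/\ is_diag_mx (A *m cdag r A),
        A *m cdag r A = (M%:R : F)%:M,
        (M%:R : F) != 0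
      & forall i : nat, (1 <= i <= M)%N -> delta i A = (M - i + 1)%N].
Proof.
have dq : (M %| #|F|.-1)%N.
  rewrite hF -subn1 -{2}(exp1n 2) subn_sqr addn1.
  exact: dvdn_mull.
have [w pw] := @exists_prim F M hM dq.
exists (Amx M w); split.
- rewrite (@AAdag F M r w pw hMr); apply/is_diag_mxP => i j ij.
  rewrite mxE; case: eqVneq => [eij|]; last by rewrite mulr0n.
  by rewrite eij eqxx in ij.
- exact: AAdag.
- exact: (@Mnz F r hr hF).
move=> i hi; have iM : (i <= M)%N by case/andP: hi.
have [c [cs c0 hc]] := @witness F M w i hi pw.
apply/eqP; rewrite eqn_leq; apply/andP; split.
  rewrite /delta; apply: leq_trans hc.
  by apply: bigmin_le_seq; rewrite ?mem_index_enum ?cs ?c0.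
rewrite /delta; apply: (big_ind (fun x => M - i + 1 <= x)%N).
- move: iM; lia.
- by move=> x y hx hy; rewrite leq_min hx hy.
- by move=> d /andP [d1 d2]; apply: (@lower F M w i d) => //.
Qed.
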